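(* Let $S$ be a profinite semigroup such that, for each integer $n\geq 1$, $S$ admits only finitely many open congruences of index $n$. Then $S$ has a fundamental system of open fully invariant congruences. In particular, this holds if $S$ is finitely generated (as a profinite semigroup).
   Context: A congruence $\rho$ on a profinite semigroup $S$ is open if it is an open subset of $S\times S$ (equivalently, it is the kernel of a continuous surjection from $S$ onto a finite semigroup). The index of an open congruence $\rho$ is the cardinality of $S/\rho$. A congruence $\rho$ is fully invariant if for every continuous endomorphism $f\colon S\to S$, $(x,y)\in\rho$ implies $(f(x),f(y))\in\rho$. The unique uniformity on the compact Hausdorff space $S$ has the open congruences as a fundamental system of entourages; a ''fundamental system of open fully invariant congruences'' means a family of open fully invariant congruences such that every open congruence on $S$ contains one of them. $S$ is finitely generated if some finite subset generates a dense subsemigroup. *)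

(* Defs.v *)
From HB Require Import structures.
From mathcomp Require Import all_boot all_order.
From mathcomp Require Import all_classical all_reals all_analysis.

Set Implicit Arguments.
Unset Strict Implicit.
Unset Printing Implicit Defensive.

Local Open Scope classical_set_scope.

Definition topological_semigroup (T : topologicalType) (op : T -> T -> T) :=
  (forall x y z, op x (op y z) = op (op x y) z) /\
  continuous (fun p : T * T => op p.1 p.2).

Definition profinite_semigroup (T : topologicalType) (op : T -> T -> T) :=
  [/\ topological_semigroup op, compact [set: T], hausdorff_space T
    & totally_disconnected [set: T]].

Definition congruence (T : Type) (op : T -> T -> T) (r : T -> T -> Prop) :=
  [/\ (forall x, r x x), (forall x y, r x y -> r y x),
      (forall x y z, r x y -> r y z -> r x z)
    & (forall x y u v, r x y -> r u v -> r (op x u) (op y v))].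

Definition open_congruence (T : topologicalType) (op : T -> T -> T)
    (r : T -> T -> Prop) :=
  congruence op r /\ open [set p : T * T | r p.1 p.2].

(* The quotient T / r has exactly n elements. *)
Definition has_index (T : Type) (r : T -> T -> Prop) (n : nat) :=
  exists f : T -> 'I_n, (forall i, exists x, f x = i) /\
                        (forall x y, r x y <-> f x = f y).

Definition continuous_endomorphism (T : topologicalType) (op : T -> T -> T)
    (f : T -> T) :=
  continuous f /\ (forall x y, f (op x y) = op (f x) (f y)).

Definition fully_invariant (T : topologicalType) (op : T -> T -> T)
    (r : T -> T -> Prop) :=
  forall f : T -> T, continuous_endomorphism op f ->
    forall x y, r x y -> r (f x) (f y).

Definition has_fundamental_system_of_open_fully_invariant_congruences
    (T : topologicalType) (op : T -> T -> T) :=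
  forall r, open_congruence op r ->
    exists s, [/\ open_congruence op s, fully_invariant op s
                & forall x y, s x y -> r x y].

Definition generated_subsemigroup (T : Type) (op : T -> T -> T) (A : set T) :
    set T :=
  \bigcap_(B in [set B : set T | A `<=` B /\
                   (forall x y, B x -> B y -> B (op x y))]) B.

Definition finitely_generated (T : topologicalType) (op : T -> T -> T) :=
  exists A : set T, finite_set A /\ dense (generated_subsemigroup op A).

(* Main.v *)
Require Import Defs.
From mathcomp Require Import all_boot all_order.
From mathcomp Require Import all_classical all_reals all_analysis.

Local Open Scope classical_set_scope.

Lemma index_of_map (T : Type) k (g : T -> 'I_k) (r : T -> T -> Prop) :
  (forall x y, r x y <-> g x = g y) -> exists m, (m <= k)%N /\ has_index r m.
Proof.
move=> Hr.
pose B := finset (fun i : 'I_k => `[< exists x, g x = i >]).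
have memB x : g x \in B by rewrite inE; apply/asboolP; exists x.
exists #|B|; split; first by rewrite -[X in (_ <= X)%N]card_ord max_card.
exists (fun x => enum_rank_in (memB x) (g x)); split.
- move=> i; have := enum_valP i; rewrite inE => /asboolP[x gx]; exists x.
  by apply: enum_val_inj; rewrite enum_rankK_in // gx.
- move=> x y; rewrite Hr; split=> E.
  by apply: enum_val_inj; rewrite !enum_rankK_in.
  by have := congr1 enum_val E; rewrite !enum_rankK_in.
Qed.

Lemma open_class (T : topologicalType) (op : T -> T -> T) r x :
  open_congruence op r -> open [set y | r x y].
Proof.
move=> [_ ro].
have -> : [set y | r x y] = (fun y => (x, y)) @^-1` [set p : T * T | r p.1 p.2] by [].
move: ro; apply: (proj1 (continuousP _)) => y.
by apply: cvg_pair; [exact: cvg_cst | exact: cvg_id].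
Qed.

Lemma finite_index_map (T : topologicalType) (op : T -> T -> T) r :
  compact [set: T] -> open_congruence op r ->
  exists k (g : T -> 'I_k), forall x y, r x y <-> g x = g y.
Proof.
move=> cpt ro; have [[rr rs rt _] _] := ro.
have /compact_near_coveringP nc := cpt.
pose F := filter_from [set: seq T] (fun l0 => [set l : seq T | {subset l0 <= l}]).
have FF : Filter F.
  apply: filter_from_filter; first by exists [::].
  move=> l1 l2 _ _; exists (l1 ++ l2) => // l /= H.
  by split => z zi; apply: H; rewrite mem_cat zi ?orbT.
have [l0 _ H] : F [set l | [set: T] `<=` (fun y => exists2 z, z \in l & r z y)].
  apply: (nc (seq T) F (fun l y => exists2 z, z \in l & r z y) FF).
  move=> x _; exists ([set y | r x y], [set l | {subset [:: x] <= l}]).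
    split; first by apply: open_nbhs_nbhs; split; [exact: open_class ro|exact: rr].
    by exists [:: x].
  by move=> [y l] [/= rxy sub]; exists x => //; apply: sub; rewrite inE.
have cov : forall y, exists2 z, z \in l0 & r z y by move=> y; exact: (H l0 (fun z => id) y I).
pose P y := fun z => `[< r z y >].
have hasP y : has (P y) l0.
  by have [z zl rzy] := cov y; apply/hasP; exists z => //; apply/asboolP.
have findlt y : (find (P y) l0 < (size l0).+1)%N.
  by rewrite ltnS ltnW // -has_find.
exists (size l0).+1, (fun y => inord (find (P y) l0)) => x y; split=> E.
  congr inord; apply: eq_find => z; apply/asboolP/asboolP => h.
    exact: rt h E.
  exact: rt h (rs _ _ E).
have E' : find (P x) l0 = find (P y) l0.
  by have := congr1 val E; rewrite /= !inordK.
have := nth_find x (hasP x); have := nth_find x (hasP y).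
rewrite -E' => /asboolP h1 /asboolP h2.
exact: rt (rs _ _ h2) h1.
Qed.

Lemma fin_enum (X : Type) (x0 : X) (A : set X) :
  finite_set A -> exists n (e : nat -> X), A `<=` e @` `I_n.
Proof.
move: X x0 A; elim/Pchoice => X x0 A /finite_fsetP[D ->].
exists (size (finmap.enum_fset D)), (nth x0 (finmap.enum_fset D)) => x /= xD.
by exists (index x (finmap.enum_fset D)); [rewrite /= index_mem | rewrite nth_index].
Qed.

Lemma open_bigI (T : topologicalType) (P : (T -> T -> Prop) -> Prop)
    (e : nat -> T -> T -> Prop) N :
  (forall t, P t -> open [set p : T * T | t p.1 p.2]) ->
  open [set p : T * T | forall i, (i < N)%N -> P (e i) -> e i p.1 p.2].
Proof.
move=> Po; elim: N => [|N IH].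
  have -> : [set p : T * T | forall i, (i < 0)%N -> P (e i) -> e i p.1 p.2] = setT.
    by apply/seteqP; split => p //= _ i.
  exact: openT.
have -> : [set p : T * T | forall i, (i < N.+1)%N -> P (e i) -> e i p.1 p.2] =
  [set p : T * T | forall i, (i < N)%N -> P (e i) -> e i p.1 p.2] `&`
  [set p : T * T | P (e N) -> e N p.1 p.2].
  apply/seteqP; split => p /=.
    by move=> h; split => [i iN|]; apply: h => //; exact: ltnW.
  move=> [h1 h2] i; rewrite ltnS leq_eqVlt => /orP[/eqP ->|]; first exact: h2.
  exact: h1.
apply: openI => //.
have [PN|PN] := pselect (P (e N)).
  have -> : [set p : T * T | P (e N) -> e N p.1 p.2] = [set p | e N p.1 p.2].
    by apply/seteqP; split => p /=; [apply| move=> h _].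
  exact: Po.
have -> : [set p : T * T | P (e N) -> e N p.1 p.2] = setT.
  by apply/seteqP; split => p //= _.
exact: openT.
Qed.

Lemma pullback_oc (T : topologicalType) (op : T -> T -> T) t f :
  open_congruence op t -> continuous_endomorphism op f ->
  open_congruence op (fun a b => t (f a) (f b)).
Proof.
move=> [[tr ts tt tc] topen] [fc fh]; split.
  split => //.
  - by move=> x y; apply: ts.
  - by move=> x y z; apply: tt.
  - by move=> x y u v h1 h2; rewrite !fh; apply: tc.
have -> : [set p : T * T | t (f p.1) (f p.2)] =
  (fun p : T * T => (f p.1, f p.2)) @^-1` [set p : T * T | t p.1 p.2] by [].
move: topen; apply: (proj1 (continuousP _)) => p.
apply: cvg_pair.
  exact: (continuous_comp (@cvg_fst _ _ _ _ _) (fc _)).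
exact: (continuous_comp (@cvg_snd _ _ _ _ _) (fc _)).
Qed.

Lemma part1 (T : topologicalType) (op : T -> T -> T) :
  compact [set: T] ->
  (forall n : nat, (0 < n)%N ->
      finite_set [set r : T -> T -> Prop | open_congruence op r /\ has_index r n]) ->
  has_fundamental_system_of_open_fully_invariant_congruences op.
Proof.
move=> cpt Hfin r ro.
have [n [g Hg]] := @finite_index_map _ op _ cpt ro.
pose Fam := \bigcup_(k in [set k | (0 < k <= n)%N])
   [set t : T -> T -> Prop | open_congruence op t /\ has_index t k].
have Ffin : finite_set Fam.
  apply: bigcup_finite.
    apply: (sub_finite_set _ (finite_II n.+1)) => k /= /andP[_ kn].
    by rewrite ltnS.
  by move=> k /= /andP[k0 _]; exact: Hfin.
have [N [e Fe]] := @fin_enum _ (fun _ _ => True) _ Ffin.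
have Foc t : Fam t -> open_congruence op t by move=> [k _ []].
pose s x y := forall i, (i < N)%N -> Fam (e i) -> e i x y.
exists s; split.
- split; last by apply: open_bigI => t /Foc [].
  split.
  + by move=> x i _ /Foc [[]].
  + by move=> x y h i iN Fi; have [[_ ts _ _] _] := Foc _ Fi; apply: ts; exact: h.
  + move=> x y z h1 h2 i iN Fi; have [[_ _ tt _] _] := Foc _ Fi.
    by apply: tt (h1 i iN Fi) (h2 i iN Fi).
  + move=> x y u v h1 h2 i iN Fi; have [[_ _ _ tc] _] := Foc _ Fi.
    by apply: tc (h1 i iN Fi) (h2 i iN Fi).
- move=> f fe x y sxy i iN Fi.
  have [k /= /andP[k0 kn] [toc [h [hs hr]]]] := Fi.
  pose t' := fun a b => e i (f a) (f b).
  have [m [mk [h' [h's h'r]]]] :=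
    @index_of_map T k (fun a => h (f a)) t' (fun a b => hr (f a) (f b)).
  have m0 : (0 < m)%N by case: (h' x) => j; case: m {mk h' h's h'r} j.
  have Ft' : Fam t'.
    exists m; first by rewrite /= m0 (leq_trans mk kn).
    by split; [exact: pullback_oc | exists h'].
  have [j jN ej] := Fe _ Ft'.
  by have := sxy j jN; rewrite ej; apply.
- move=> x y sxy.
  have [m [mn Hm]] := @index_of_map _ _ _ _ Hg.
  have m0 : (0 < m)%N by case: Hm => h' _; case: (h' x) => j; case: m {mn h'} j.
  have Fr : Fam r by exists m; [rewrite /= m0 | split].
  have [j jN ej] := Fe _ Fr.
  by have := sxy j jN; rewrite ej; apply.
Qed.

Lemma fg_fin (T : topologicalType) (op : T -> T -> T) :
  finitely_generated op ->
  forall n : nat, (0 < n)%N ->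
      finite_set [set r : T -> T -> Prop | open_congruence op r /\ has_index r n].
Proof.
move=> [A [Afin Adense]] n _.
have [l Al] := proj1 (finite_seqP A) Afin.
pose t := in_tuple l.
pose D := ({ffun 'I_n * 'I_n -> 'I_n} * {ffun 'I_(size l) -> 'I_n})%type.
pose good (d : D) (phi : T -> 'I_n) :=
  [/\ forall x y, phi (op x y) = d.1 (phi x, phi y),
      forall i, phi (tnth t i) = d.2 i
    & forall x, open [set y | phi y = phi x]].
have uniq_good d psi phi : good d psi -> good d phi -> forall x, psi x = phi x.
  move=> [ph1 ph2 ph3] [qh1 qh2 qh3].
  have gen : generated_subsemigroup op A `<=` [set x | psi x = phi x].
    move=> x genx; apply: genx; split.
      move=> z; rewrite Al /= => /(tnthP t)[i ->].
      by rewrite ph2 qh2.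
    by move=> a b /= ha hb; rewrite ph1 qh1 ha hb.
  move=> x; apply: contrapT => neq.
  have O0 : [set y | psi y = psi x] `&` [set y | phi y = phi x] !=set0 by exists x.
  have [y] := Adense _ O0 (openI (ph3 x) (qh3 x)).
  move=> [[/= e1 e2] gy]; apply: neq.
  by rewrite -e1 -e2; exact: gen.
pose rel_of (d : D) := fun x y : T => forall phi, good d phi -> phi x = phi y.
apply: (sub_finite_set _ (finite_image rel_of (@finite_finset _ [set: D]))).
move=> r [ro [phi [phis phir]]].
have [[rr rs rt rc] _] := ro.
pose rep i := projT1 (cid (phis i)).
have repP i : phi (rep i) = i by rewrite /rep; case: cid.
pose d : D := ([ffun p => phi (op (rep p.1) (rep p.2))], [ffun i => phi (tnth t i)]).
have gd : good d phi.
  split.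
  - move=> x y; rewrite /= ffunE /=; apply/phir; apply: rc.
      by apply/phir; rewrite repP.
    by apply/phir; rewrite repP.
  - by move=> i; rewrite /= ffunE.
  - move=> x; have -> : [set y | phi y = phi x] = [set y | r x y].
      by apply/seteqP; split => y /=; rewrite phir => ->.
    exact: open_class ro.
exists d => //; apply/funext => x; apply/funext => y; apply/propext; split.
  by move=> h; apply/phir; apply: h.
by move=> /phir h psi gpsi; rewrite !(uniq_good d psi phi gpsi gd).
Qed.

Theorem proposition2 (T : topologicalType) (op : T -> T -> T) :
  profinite_semigroup op ->
  ((forall n : nat, (0 < n)%N ->
      finite_set [set r : T -> T -> Prop | open_congruence op r /\ has_index r n]) ->
    has_fundamental_system_of_open_fully_invariant_congruences op) /\
  (finitely_generated op ->
    has_fundamental_system_of_open_fully_invariant_congruences op).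
Proof.
move=> [_ cpt _ _]; split; first exact: part1.
by move=> fg; apply: part1 => //; exact: fg_fin.
Qed.
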